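(* Let $P$ be a simple closed $n$-gon, $n\ge4$, in $\mathbb{R}^2$, and let $a\in\mathbb{R}^2\setminus P$. If every ray emanating from $a$ meets $P$, then $a$ sees via $\mathbb{R}^2\setminus P$ two non-adjacent vertices of $P$, i.e. there are vertices $c,c'$ of $P$ that are not joined by an edge of $P$ (and are distinct) with $]a,c[\,\subset\mathbb{R}^2\setminus P$ and $]a,c'[\,\subset\mathbb{R}^2\setminus P$.
   Context: A simple closed $n$-gon is $P=\bigcup_{i=1}^n[p_{i-1},p_i]$ with distinct vertices $p_0,\dots,p_{n-1}$, $p_n=p_0$, whose edges meet only in common endpoints of consecutive edges. A ray emanating from $a$ is a set $\{a+\lambda w:\lambda\ge0\}$ with $w\ne0$. $]x,y[$ denotes the open segment. *)

(* Defs.v *)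
From HB Require Import structures.
From mathcomp Require Import all_boot all_order all_algebra.
From mathcomp Require Import reals.
Set Implicit Arguments. Unset Strict Implicit. Unset Printing Implicit Defensive.
Import Order.TTheory GRing.Theory Num.Theory.
Local Open Scope ring_scope.

Definition point (R : numDomainType) := (R * R)%type.

Definition affine (R : numDomainType) (a b : point R) (t : R) : point R :=
  (a.1 + t * (b.1 - a.1), a.2 + t * (b.2 - a.2)).

Definition cseg (R : numDomainType) (a b : point R) (x : point R) : Prop :=
  exists t : R, 0 <= t /\ t <= 1 /\ x = affine a b t.

Definition oseg (R : numDomainType) (a b : point R) (x : point R) : Prop :=
  exists t : R, 0 < t /\ t < 1 /\ x = affine a b t.

(* Polygon given by n and vertices p 0, ..., p (n-1); indices taken mod n,
   so p_n = p_0.  Edge i is [p_i, p_{i+1 mod n}]. *)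
Definition edge (R : numDomainType) (n : nat) (p : nat -> point R) (i : nat)
  : point R -> Prop := cseg (p i) (p ((i.+1) %% n)%N).

Definition polygon (R : numDomainType) (n : nat) (p : nat -> point R)
  (x : point R) : Prop := exists2 i, (i < n)%N & edge n p i x.

Definition adjacent_idx (n i j : nat) : Prop :=
  j = (i.+1 %% n)%N \/ i = (j.+1 %% n)%N.

Definition simple_polygon (R : numDomainType) (n : nat) (p : nat -> point R)
  : Prop :=
  (forall i j, (i < n)%N -> (j < n)%N -> i <> j -> p i <> p j) /\
  (forall i j, (i < n)%N -> (j < n)%N -> i <> j ->
     forall x, edge n p i x -> edge n p j x ->
       (j = (i.+1 %% n)%N /\ x = p j) \/ (i = (j.+1 %% n)%N /\ x = p i)).

Definition ray (R : numDomainType) (a w : point R) (x : point R) : Prop :=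
  exists lam : R, 0 <= lam /\ x = (a.1 + lam * w.1, a.2 + lam * w.2).

(* Main.v *)
Require Import Defs.
From HB Require Import structures.
From mathcomp Require Import all_boot all_order all_algebra.
From mathcomp Require Import reals.
From mathcomp Require Import ring lra zify.
From Stdlib Require Import Classical.
Import Order.TTheory GRing.Theory Num.Theory.
Local Open Scope ring_scope.

Ltac clr := repeat match goal with
  | H : context [@eq (prod _ _) _ _] |- _ => clear H
  | H : context [@eq (point _) _ _] |- _ => clear H end.
Ltac plra := clr; lra.
Ltac pnra := clr; nra.

Lemma pt_eq (T : Type) (u v : T * T) : u.1 = v.1 -> u.2 = v.2 -> u = v.
Proof. by case: u v => ? ? [? ?] /= -> ->. Qed.

Lemma fin_min {R : realFieldType} {N : nat} {Q : nat -> Prop} (f : nat -> R) :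
  (exists k, (k < N)%N /\ Q k) ->
  exists k, (k < N)%N /\ Q k /\ forall j, (j < N)%N -> Q j -> f k <= f j.
Proof.
elim: N => [|N IH]; first by case=> k [].
move=> HE.
case: (classic (exists k, (k < N)%N /\ Q k)) => [/IH [m [Hm [Qm Hmin]]]|Hno].
  case: (classic (Q N)) => QN.
    case: (lerP (f m) (f N)) => Hc.
      exists m; split; first lia. split=> // j Hj Qj.
      have [/eqP->|Hjn] := boolP (j == N); first by [].
      apply: Hmin => //; lia.
    exists N; split=> //; split=> // j Hj Qj.
    have [/eqP->|Hjn] := boolP (j == N); first by [].
    apply: le_trans (ltW Hc) (Hmin j _ Qj); lia.
  exists m; split; first lia. split=> // j Hj Qj.
  have [/eqP Ej|Hjn] := boolP (j == N); first by subst.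
  apply: Hmin => //; lia.
case: HE => k [Hk Qk].
have Ek : k = N.
  have [/eqP//|Hkn] := boolP (k == N).
  by exfalso; apply: Hno; exists k; split=> //; lia.
subst k; exists N; split=> //; split=> // j Hj Qj.
have [/eqP->|Hjn] := boolP (j == N); first by [].
by exfalso; apply: Hno; exists j; split=> //; lia.
Qed.

Lemma cseg_conv {R : realFieldType} {s t z w : point R} {th : R} :
  cseg s t z -> cseg s t w -> 0 <= th -> th <= 1 -> cseg s t (affine z w th).
Proof.
move=> [t1 [h1 [h1' ->]]] [t2 [h2 [h2' ->]]] H0 H1.
exists (t1 + th * (t2 - t1)); split; first nra. split; first nra.
apply: pt_eq; rewrite /affine /=; ring.
Qed.

Lemma cseg_l {R : realFieldType} (s t : point R) : cseg s t s.
Proof. exists 0; split=> //; split; first lra. apply: pt_eq; rewrite /affine /=; ring. Qed.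
Lemma cseg_r {R : realFieldType} (s t : point R) : cseg s t t.
Proof. exists 1; split; first lra; split; first lra. apply: pt_eq; rewrite /affine /=; ring. Qed.


Definition aff_map {R : realFieldType} (F : point R -> point R) :=
  (forall x y t, F (affine x y t) = affine (F x) (F y) t) /\ injective F.

Lemma edge_map {R : realFieldType} {F n} {p : nat -> point R} {i x} :
  aff_map F -> edge n (fun k => F (p k)) i (F x) -> edge n p i x.
Proof.
move=> [hF iF] [t [h0 [h1 E]]]; exists t; split=> //; split=> //.
by apply: iF; rewrite hF.
Qed.

Lemma edge_map' {R : realFieldType} {F n} {p : nat -> point R} {i x} :
  aff_map F -> edge n p i x -> edge n (fun k => F (p k)) i (F x).
Proof.
move=> [hF iF] [t [h0 [h1 E]]]; exists t; split=> //; split=> //.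
by rewrite E hF.
Qed.

Lemma polygon_map {R : realFieldType} {F n} {p : nat -> point R} {x} :
  aff_map F -> polygon n (fun k => F (p k)) (F x) -> polygon n p x.
Proof. move=> hF [i Hi He]; exists i => //; exact: edge_map He. Qed.

Lemma polygon_map' {R : realFieldType} {F n} {p : nat -> point R} {x} :
  aff_map F -> polygon n p x -> polygon n (fun k => F (p k)) (F x).
Proof. move=> hF [i Hi He]; exists i => //; exact: edge_map' He. Qed.

Lemma edge_img {R : realFieldType} {F n} {p : nat -> point R} {i y} :
  aff_map F -> edge n (fun k => F (p k)) i y -> exists x, y = F x.
Proof.
move=> [hF iF] [t [h0 [h1 E]]]; exists (affine (p i) (p (i.+1 %% n)%N) t).
by rewrite hF.
Qed.

Lemma simple_map {R : realFieldType} F n (p : nat -> point R) :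
  aff_map F -> simple_polygon n p -> simple_polygon n (fun k => F (p k)).
Proof.
move=> hF [H1 H2]; split.
  move=> i j Hi Hj Hij E; apply: (H1 i j Hi Hj Hij); exact: hF.2 E.
move=> i j Hi Hj Hij y Ei Ej.
have [x Ex] := edge_img hF Ei; subst y.
have := H2 i j Hi Hj Hij x (edge_map hF Ei) (edge_map hF Ej).
by case=> [[-> ->]|[-> ->]]; [left|right].
Qed.

Lemma oseg_map {R : realFieldType} {F} {a b x : point R} :
  aff_map F -> oseg a b x -> oseg (F a) (F b) (F x).
Proof. move=> [hF _] [t [h0 [h1 ->]]]; exists t; split=> //; split=> //. Qed.


Lemma theta_lemma {R : realFieldType} {fz gz fw gw : R} :
  0 < fz -> 0 < gz -> (fw < 0 \/ gw <= 0) ->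
  exists th, 0 < th /\ th <= 1 /\ 0 <= fz + th * (fw - fz) /\
    0 <= gz + th * (gw - gz) /\
    (fz + th * (fw - fz) = 0 \/ gz + th * (gw - gz) = 0).
Proof.
move=> Hf Hg H.
set tf := fz / (fz - fw). set tg := gz / (gz - gw).
have Ef : fw < 0 -> tf * (fz - fw) = fz.
  move=> h; rewrite /tf mulfVK //; apply/eqP; lra.
have Eg : gw <= 0 -> tg * (gz - gw) = gz.
  move=> h; rewrite /tg mulfVK //; apply/eqP; lra.
have Rf : fw < 0 -> 0 < tf /\ tf < 1.
  move=> h; have := Ef h; split; nra.
have Rg : gw <= 0 -> 0 < tg /\ tg <= 1.
  move=> h; have := Eg h; split; nra.
case: (ltP fw 0) => hfw; case: (leP gw 0) => hgw.
- have := Ef hfw; have := Eg hgw; have := Rf hfw; have := Rg hgw.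
  move=> [? ?] [? ?] e1 e2.
  case: (leP tf tg) => ht.
    exists tf; split=> //; split; first lra; split; first nra; split; first nra. left; nra.
  exists tg; split=> //; split; first lra; split; first nra; split; first nra. right; nra.
- have := Ef hfw; have := Rf hfw; move=> [? ?] e1.
  exists tf; split=> //; split; first lra; split; first nra; split; first nra. left; nra.
- have := Eg hgw; have := Rg hgw; move=> [? ?] e1.
  exists tg; split=> //; split; first lra; split; first nra; split; first nra. right; nra.
- exfalso; case: H; lra.
Qed.


Lemma cseg_sym {R : realFieldType} {A B x : point R} : cseg A B x -> cseg B A x.
Proof.
move=> [t [h0 [h1 ->]]]; exists (1 - t); split; first lra; split; first lra.
apply: pt_eq; rewrite /affine /=; ring.
Qed.

Lemma cseg_sum1 {R : realFieldType} (A B y : point R) :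
  A.1 + A.2 = 1 -> B.1 + B.2 = 1 -> cseg A B y -> y.1 + y.2 = 1.
Proof.
move=> hA hB [t [_ [_ ->]]]; rewrite /affine /=.
have -> : A.1 + t * (B.1 - A.1) + (A.2 + t * (B.2 - A.2)) =
  (A.1 + A.2) + t * ((B.1 + B.2) - (A.1 + A.2)) by ring.
rewrite hA hB; ring.
Qed.

Lemma edge_line {R : realFieldType} {B : point R} :
  cseg (0,1) B (1,0) -> (1,0) <> B -> B.1 + B.2 = 1 /\ B.2 < 0.
Proof.
move=> [t [h0 [h1 E]]] hB.
have e1 : t * B.1 = 1 by move: (congr1 fst E); rewrite /affine /= => ->; ring.
have e2 : t * B.2 = t - 1 by move: (congr1 snd E); rewrite /affine /= => h; lra.
have ht : t < 1.
  rewrite lt_neqAle h1 andbT; apply/eqP => et; apply: hB; subst t.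
  apply: pt_eq => /=; lra.
have tp : 0 < t.
  rewrite lt_neqAle h0 andbT; apply/eqP => e; rewrite -e mul0r in e1; lra.
split; nra.
Qed.

Lemma keyP {R : realFieldType} (a b c d : R) : 0 < b -> 0 < d ->
  (- a / b <= - c / d) <-> (c * b <= a * d).
Proof.
move=> hb hd; rewrite !mulNr.
have ea : a = (a / b) * b by rewrite mulfVK //; apply/eqP; lra.
have ec : c = (c / d) * d by rewrite mulfVK //; apply/eqP; lra.
set x := a / b in ea *; set y := c / d in ec *.
have hbd : 0 < b * d by apply: mulr_gt0.
split=> h.
  have h' : 0 <= (x - y) * (b * d) by apply: mulr_ge0; lra.
  rewrite ea ec; nra.
move: h; rewrite ea ec => h.
have : y * (d * b) <= x * (d * b) by nra.
move=> h2; have hdb : 0 < d * b by nra.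
move: h2; rewrite ler_pM2r // => h2; lra.
Qed.

Definition MinP {R : realFieldType} n (p : nat -> point R) (v : point R) :=
  forall j, (j < n)%N -> 0 <= (p j).1 -> 0 < (p j).2 -> (p j).1 + (p j).2 <= 1 ->
    0 <= v.1 * (p j).2 - v.2 * (p j).1 /\
    (v.1 * (p j).2 - v.2 * (p j).1 = 0 -> v.2 <= (p j).2).

Lemma vis_col {R : realFieldType} n (p : nat -> point R) (v : point R) m sg :
  0 <= v.1 -> 0 < v.2 -> v.1 + v.2 <= 1 -> MinP n p v ->
  (m < n)%N -> 0 < sg -> sg < 1 ->
  (p m).1 = sg * v.1 -> (p m).2 = sg * v.2 -> False.
Proof.
move=> hv1 hv2 hv3 Hmin hm s0 s1 e1 e2.
have [_ h] := Hmin m hm (ltac:(rewrite e1; nra)) (ltac:(rewrite e2; nra))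
  (ltac:(rewrite e1 e2; nra)).
have : v.2 <= (p m).2 by apply: h; rewrite e1 e2; ring.
rewrite e2; nra.
Qed.


Lemma vis_side {R : realFieldType} n (p : nat -> point R) i (v z : point R) mu j m :
  0 <= v.1 -> 0 < v.2 -> v.1 + v.2 <= 1 -> MinP n p v ->
  (forall y, edge n p i y -> y.1 + y.2 = 1) ->
  (forall y : point R, y.1 + y.2 = 1 -> 0 <= y.2 -> y.2 <= 1 -> edge n p i y) ->
  (forall j y, (j < n)%N -> edge n p j y -> edge n p i y ->
    (y = (1,0) \/ (0 < y.1 /\ 0 < y.2)) -> j = i) ->
  (forall l : R, 0 <= l -> l < 1 -> ~ polygon n p (l, 0)) ->
  edge n p i (1,0) ->
  z.1 = mu * v.1 -> z.2 = mu * v.2 -> 0 < mu -> mu < 1 ->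
  (j < n)%N -> edge n p j z -> (m < n)%N -> edge n p j (p m) ->
  v.1 * (p m).2 - v.2 * (p m).1 < 0 -> False.
Proof.
move=> hv1 hv2 hv3 Hmin F1 F2 F3 Hfree Eq z1 z2 hm0 hm1 hj ej hm em hc.
have zni : ~ edge n p i z by move=> /F1; rewrite z1 z2 => h; nra.
have hw : 1 - ((p m).1 + (p m).2) < 0 \/ (p m).2 <= 0.
  case: (leP (p m).2 0) => h2; first by right.
  case: (ltP (1 - ((p m).1 + (p m).2)) 0) => h3; first by left.
  exfalso.
  case: (leP 0 (p m).1) => h1.
    have [h _] := Hmin m hm h1 h2 (ltac:(lra)); lra.
  nra.
have hfz : 0 < 1 - (z.1 + z.2) by rewrite z1 z2; nra.
have hgz : 0 < z.2 by rewrite z2; nra.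
have [th [t0 [t1 [f0 [g0 fg]]]]] := theta_lemma hfz hgz hw.
have ey := cseg_conv ej em (ltW t0) t1.
move: ey; move Ey: (affine z (p m) th) => y ey.
have y1 : y.1 = z.1 + th * ((p m).1 - z.1) by rewrite -Ey.
have y2 : y.2 = z.2 + th * ((p m).2 - z.2) by rewrite -Ey.
clear Ey.
have cvy : v.1 * y.2 - v.2 * y.1 = th * (v.1 * (p m).2 - v.2 * (p m).1).
  rewrite y1 y2 z1 z2; ring.
have cvn : v.1 * y.2 - v.2 * y.1 < 0 by rewrite cvy; nra.
have y2p : 0 <= y.2 by rewrite y2; lra.
have y1p : 0 < y.1 by nra.
have ysum : 1 - (y.1 + y.2) = 1 - (z.1 + z.2) + th * ((1 - ((p m).1 + (p m).2)) - (1 - (z.1 + z.2))).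
  rewrite y1 y2; ring.
have yp : polygon n p y by exists j.
case: fg => fg.
- have ys : y.1 + y.2 = 1 by lra.
  have ei : edge n p i y by apply: F2 => //; lra.
  have hd : y = (1,0) \/ (0 < y.1 /\ 0 < y.2).
    case: (ltP 0 y.2) => h; first by right.
    left; apply: pt_eq => /=; lra.
  have eji := F3 j y hj ey ei hd; subst j; exact: zni ej.
- have y20 : y.2 = 0 by lra.
  case: (ltP y.1 1) => h.
    apply: (Hfree y.1 (ltW y1p) h).
    by have -> : (y.1, 0) = y by apply: pt_eq => /=; lra.
  have ey10 : y = (1,0) by apply: pt_eq => /=; lra.
  have ei : edge n p i y by rewrite ey10.
  have eji := F3 j y hj ey ei (or_introl ey10); subst j; exact: zni ej.
Qed.


Lemma vis_fin {R : realFieldType} n (p : nat -> point R) j (v z s t : point R) mu tau :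
  0 < v.2 -> (forall l : R, 0 <= l -> l < 1 -> ~ polygon n p (l, 0)) -> (j < n)%N ->
  z.1 = mu * v.1 -> z.2 = mu * v.2 -> 0 < mu -> mu < 1 -> edge n p j z ->
  z.1 = s.1 + tau * (t.1 - s.1) -> z.2 = s.2 + tau * (t.2 - s.2) ->
  0 <= tau -> tau <= 1 -> edge n p j s -> edge n p j t ->
  (v.1 * s.2 - v.2 * s.1 < 0 -> False) -> (v.1 * t.2 - v.2 * t.1 < 0 -> False) ->
  (forall sg, 0 < sg -> sg < 1 -> s.1 = sg * v.1 -> s.2 = sg * v.2 -> False) ->
  (forall sg, 0 < sg -> sg < 1 -> t.1 = sg * v.1 -> t.2 = sg * v.2 -> False) ->
  False.
Proof.
move=> hv2 Hfree hj z1 z2 hm0 hm1 ej zs1 zs2 ht0 ht1 es et Ls Lt Cs Ct.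
have hcz : (1 - tau) * (v.1 * s.2 - v.2 * s.1) + tau * (v.1 * t.2 - v.2 * t.1) = 0.
  have : v.1 * z.2 - v.2 * z.1 = 0 by rewrite z1 z2; ring.
  rewrite zs1 zs2 => h; rewrite -h; ring.
case: (ltP (v.1 * s.2 - v.2 * s.1) 0) => hcs; first exact: Ls.
case: (ltP (v.1 * t.2 - v.2 * t.1) 0) => hct; first exact: Lt.
case: (ltP 0 (v.1 * s.2 - v.2 * s.1)) => hcs'.
  have et1 : tau = 1 by nra.
  apply: (Ct mu hm0 hm1); [rewrite -z1 zs1 | rewrite -z2 zs2]; rewrite et1; ring.
case: (ltP 0 (v.1 * t.2 - v.2 * t.1)) => hct'.
  have et0 : tau = 0 by nra.
  apply: (Cs mu hm0 hm1); [rewrite -z1 zs1 | rewrite -z2 zs2]; rewrite et0; ring.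
have cs0 : v.1 * s.2 - v.2 * s.1 = 0 by lra.
have ct0 : v.1 * t.2 - v.2 * t.1 = 0 by lra.
have hv2n : v.2 != 0 by apply/eqP; lra.
move: (s.2 / v.2) (mulfVK hv2n s.2) => ss es2; move/esym: es2 => es2.
move: (t.2 / v.2) (mulfVK hv2n t.2) => st et2; move/esym: et2 => et2.
have es1 : s.1 = ss * v.1.
  apply: (mulIf hv2n); rewrite -mulrA [v.1 * _]mulrC mulrA -es2; lra.
have et1 : t.1 = st * v.1.
  apply: (mulIf hv2n); rewrite -mulrA [v.1 * _]mulrC mulrA -et2; lra.
have emu : mu = ss + tau * (st - ss).
  apply: (mulIf hv2n); rewrite -z2 zs2 es2 et2; ring.
have Lneg : forall (e : point R) sg, edge n p j e -> e.1 = sg * v.1 -> e.2 = sg * v.2 ->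
    sg <= 0 -> False.
  move=> e sg ee e1 e2 hs.
  have hd : 0 < mu - sg by lra.
  move: (- sg / (mu - sg)) (mulfVK (lt0r_neq0 hd) (- sg)) => th eth.
  have th0 : 0 <= th by nra.
  have th1 : th <= 1 by nra.
  have ey := cseg_conv ee ej th0 th1.
  apply: (Hfree 0 (lexx _) ltr01); exists j => //.
  have -> : ((0 : R), (0 : R)) = affine e z th; last exact: ey.
  apply: pt_eq; rewrite /affine /= ?e1 ?e2 ?z1 ?z2.
    have -> : sg * v.1 + th * (mu * v.1 - sg * v.1) = (th * (mu - sg) + sg) * v.1 by ring.
    rewrite eth; ring.
  have -> : sg * v.2 + th * (mu * v.2 - sg * v.2) = (th * (mu - sg) + sg) * v.2 by ring.
  rewrite eth; ring.
case: (leP ss 0) => hss; first exact: (Lneg s ss es es1 es2 hss).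
case: (leP st 0) => hst; first exact: (Lneg t st et et1 et2 hst).
case: (leP ss mu) => hsm.
  exact: (Cs ss hss (le_lt_trans hsm hm1) es1 es2).
case: (leP st mu) => htm.
  exact: (Ct st hst (le_lt_trans htm hm1) et1 et2).
have hsum : (1 - tau) * (ss - mu) + tau * (st - mu) = 0 by rewrite emu; ring.
case: (ltP 0 tau) => ht.
  have h1 : 0 < tau * (st - mu) by apply: mulr_gt0; lra.
  have h2 : 0 <= (1 - tau) * (ss - mu) by apply: mulr_ge0; lra.
  lra.
have et0 : tau = 0 by lra.
rewrite et0 in hsum; lra.
Qed.

Lemma vis_main {R : realFieldType} n (p : nat -> point R) i (v : point R) :
  0 <= v.1 -> 0 < v.2 -> v.1 + v.2 <= 1 -> MinP n p v ->
  (forall y, edge n p i y -> y.1 + y.2 = 1) ->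
  (forall y : point R, y.1 + y.2 = 1 -> 0 <= y.2 -> y.2 <= 1 -> edge n p i y) ->
  (forall j y, (j < n)%N -> edge n p j y -> edge n p i y ->
    (y = (1,0) \/ (0 < y.1 /\ 0 < y.2)) -> j = i) ->
  (forall l : R, 0 <= l -> l < 1 -> ~ polygon n p (l, 0)) ->
  edge n p i (1,0) ->
  forall z, oseg (0,0) v z -> ~ polygon n p z.
Proof.
move=> hv1 hv2 hv3 Hmin F1 F2 F3 Hfree Eq z [mu [hm0 [hm1 Ez]]] [j hj ej].
have z1 : z.1 = mu * v.1 by rewrite Ez /affine /=; ring.
have z2 : z.2 = mu * v.2 by rewrite Ez /affine /=; ring.
clear Ez.
have Hj1 : (j.+1 %% n < n)%N by rewrite ltn_mod; lia.
have Lside := fun m hm em hc =>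
  @vis_side R n p i v z mu j m hv1 hv2 hv3 Hmin F1 F2 F3 Hfree Eq z1 z2 hm0 hm1 hj ej hm em hc.
have Lcol := fun m sg hm h1 h2 e1 e2 => @vis_col R n p v m sg hv1 hv2 hv3 Hmin hm h1 h2 e1 e2.
have [tau [ht0 [ht1 Ezt]]] := ej.
have zs1 : z.1 = (p j).1 + tau * ((p (j.+1 %% n)%N).1 - (p j).1) by rewrite Ezt.
have zs2 : z.2 = (p j).2 + tau * ((p (j.+1 %% n)%N).2 - (p j).2) by rewrite Ezt.
clear Ezt.
exact: (@vis_fin R n p j v z (p j) (p (j.+1 %% n)%N) mu tau hv2 Hfree hj z1 z2 hm0 hm1 ej zs1 zs2 ht0 ht1
  (cseg_l _ _) (cseg_r _ _) (Lside j hj (cseg_l _ _)) (Lside _ Hj1 (cseg_r _ _))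
  (fun sg => Lcol j sg hj) (fun sg => Lcol _ sg Hj1)).
Qed.

Lemma core_norm {R : realFieldType} n (p : nat -> point R) i :
  simple_polygon n p -> (i < n)%N ->
  (p i = (0,1) \/ p (i.+1 %% n)%N = (0,1)) ->
  edge n p i (1,0) -> p i <> (1,0) -> p (i.+1 %% n)%N <> (1,0) ->
  (forall l : R, 0 <= l -> l < 1 -> ~ polygon n p (l, 0)) ->
  exists k, (k < n)%N /\ 0 <= (p k).1 /\ 0 < (p k).2 /\ (p k).1 + (p k).2 <= 1 /\
    forall z, oseg (0,0) (p k) z -> ~ polygon n p z.
Proof.
move=> Hs Hi Hr Eq Hq1 Hq2 Hfree.
have Hn : (i.+1 %% n < n)%N by rewrite ltn_mod; lia.
have [B [HB1 [HB2 HBe]]] : exists B : point R, B.1 + B.2 = 1 /\ B.2 < 0 /\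
   ((p i = (0,1) /\ p (i.+1 %% n)%N = B) \/ (p (i.+1 %% n)%N = (0,1) /\ p i = B)).
  case: Hr => E.
    exists (p (i.+1 %% n)%N); rewrite /edge E in Eq.
    have [h1 h2] := edge_line Eq (nesym Hq2); split=> //; split=> //; by left.
  exists (p i); rewrite /edge E in Eq.
  have [h1 h2] := edge_line (cseg_sym Eq) (nesym Hq1); split=> //; split=> //; by right.
have F1 : forall y, edge n p i y -> y.1 + y.2 = 1.
  move=> y; rewrite /edge; case: HBe => [[-> ->]|[-> ->]]; apply: cseg_sum1 => //=; lra.
have Er : exists kr, (kr < n)%N /\ p kr = (0,1).
  by case: Hr => E; [exists i | exists (i.+1 %% n)%N].
have F2 : forall y : point R, y.1 + y.2 = 1 -> 0 <= y.2 -> y.2 <= 1 -> edge n p i y.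
  move=> y h1 h2 h3.
  have Hre : edge n p i (0,1) by case: Hr => <-; [exact: cseg_l | exact: cseg_r].
  have := cseg_conv Eq Hre h2 h3.
  have -> : affine (1,0) (0,1) y.2 = y by apply: pt_eq; rewrite /affine /=; lra.
  done.
have F3 : forall j y, (j < n)%N -> edge n p j y -> edge n p i y ->
    (y = (1,0) \/ (0 < y.1 /\ 0 < y.2)) -> j = i.
  move=> j y hj ej ei hy.
  case: (classic (j = i)) => // hji.
  have := Hs.2 i j Hi hj (nesym hji) y ei ej.
  move=> Hd.
  have Hy : y = p i \/ y = p (i.+1 %% n)%N.
    by case: Hd => [[Ej Ey]|[_ Ey]]; [right; rewrite Ey Ej | left].
  exfalso; case: hy => [ey|[y1 y2]].
    by case: Hy => E; [apply: Hq1 | apply: Hq2]; rewrite -E.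
  case: HBe => [[E1 E2]|[E1 E2]]; case: Hy => Ey; move: y1 y2; rewrite Ey ?E1 ?E2 /= => y1 y2; clear -y1 y2 HB2; lra.
pose Cand j := 0 <= (p j).1 /\ 0 < (p j).2 /\ (p j).1 + (p j).2 <= 1.
have Cne : exists k, (k < n)%N /\ Cand k.
  case: Er => kr [hkr E]; exists kr; split=> //; rewrite /Cand E /=; lra.
have [k1 [Hk1 [Ck1 Hm1]]] := fin_min (fun j => - (p j).1 / (p j).2) Cne.
have Cne2 : exists k, (k < n)%N /\ (Cand k /\ - (p k).1 / (p k).2 = - (p k1).1 / (p k1).2).
  by exists k1.
have [k [Hk [[Ck Ek] Hm2]]] := fin_min (fun j => (p j).2) Cne2.
have Hmin : MinP n p (p k).
  move=> j hj cj1 cj2 cj3; have cj : Cand j by [].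
  have [_ [hv2 _]] := Ck; have [_ [hj2 _]] := cj.
  have h1 := Hm1 j hj cj; rewrite -Ek in h1.
  have := (keyP (p k).1 (p k).2 (p j).1 (p j).2 hv2 hj2).1 h1 => h2.
  split; first lra.
  move=> e; apply: Hm2 => //; split=> //.
  apply/eqP; rewrite eq_le; apply/andP; split.
    by rewrite -Ek; apply/(keyP _ _ _ _ hj2 hv2); lra.
  exact: Hm1 j hj cj.
exists k; split=> //; split; first by case: Ck.
split; first by case: Ck => _ [].
split; first by case: Ck => _ [].
have [hv1 [hv2 hv3]] := Ck.
exact: (@vis_main R n p i (p k) hv1 hv2 hv3 Hmin F1 F2 F3 Hfree Eq).
Qed.

Lemma vtx_edge {R : realFieldType} n (p : nat -> point R) j :
  edge n p j (p j) /\ edge n p j (p (j.+1 %% n)%N).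
Proof. split; [exact: cseg_l | exact: cseg_r]. Qed.

Lemma vtx_poly {R : realFieldType} n (p : nat -> point R) j :
  (j < n)%N -> polygon n p (p j).
Proof. move=> hj; exists j => //; exact: cseg_l. Qed.


Definition crs {R : realFieldType} (u v w : point R) : R :=
  (v.1 - u.1) * (w.2 - u.2) - (v.2 - u.2) * (w.1 - u.1).

Lemma side_lemma {R : realFieldType} n (p : nat -> point R) (a q r : point R) i :
  simple_polygon n p -> (i < n)%N ->
  edge n p i q -> p i <> q -> p (i.+1 %% n)%N <> q ->
  (r = p i \/ r = p (i.+1 %% n)%N) ->
  crs a q r != 0 ->
  (forall l : R, 0 <= l -> l < 1 -> ~ polygon n p (affine a q l)) ->
  exists k, (k < n)%N /\ (forall x, oseg a (p k) x -> ~ polygon n p x) /\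
    exists al be, 0 <= al /\ 0 < be /\
      (p k).1 - a.1 = al * (q.1 - a.1) + be * (r.1 - a.1) /\
      (p k).2 - a.2 = al * (q.2 - a.2) + be * (r.2 - a.2).
Proof.
move=> Hs Hi Eq Hq1 Hq2 Hr Hc Hfree.
pose ic := (crs a q r)^-1.
have cic : crs a q r * ic = 1 by rewrite /ic mulfV.
have icn : ic != 0 by rewrite /ic invr_eq0.
pose F (z : point R) := (crs a z r * ic, crs a q z * ic).
have hF : aff_map F.
  split.
    move=> x y t; apply: pt_eq; rewrite /F /affine /crs /=; ring.
  move=> x y E.
  have E1 : crs a x r = crs a y r by apply: (mulIf icn); exact: (congr1 fst E).
  have E2 : crs a q x = crs a q y by apply: (mulIf icn); exact: (congr1 snd E).
  have Hc' : crs a q r != 0 by [].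
  move: E1 E2 Hc'; rewrite /crs => E1 E2 Hc'.
  apply: pt_eq.
    apply/eqP; rewrite -subr_eq0; apply/eqP; apply: (mulIf Hc'); rewrite mul0r.
    have -> : (x.1 - y.1) * ((q.1 - a.1) * (r.2 - a.2) - (q.2 - a.2) * (r.1 - a.1)) =
      (q.1 - a.1) * (((x.1 - a.1) * (r.2 - a.2) - (x.2 - a.2) * (r.1 - a.1)) -
                      ((y.1 - a.1) * (r.2 - a.2) - (y.2 - a.2) * (r.1 - a.1))) +
      (r.1 - a.1) * (((q.1 - a.1) * (x.2 - a.2) - (q.2 - a.2) * (x.1 - a.1)) -
                      ((q.1 - a.1) * (y.2 - a.2) - (q.2 - a.2) * (y.1 - a.1))) by ring.
    rewrite E1 E2; ring.
  apply/eqP; rewrite -subr_eq0; apply/eqP; apply: (mulIf Hc'); rewrite mul0r.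
  have -> : (x.2 - y.2) * ((q.1 - a.1) * (r.2 - a.2) - (q.2 - a.2) * (r.1 - a.1)) =
    (q.2 - a.2) * (((x.1 - a.1) * (r.2 - a.2) - (x.2 - a.2) * (r.1 - a.1)) -
                    ((y.1 - a.1) * (r.2 - a.2) - (y.2 - a.2) * (r.1 - a.1))) +
    (r.2 - a.2) * (((q.1 - a.1) * (x.2 - a.2) - (q.2 - a.2) * (x.1 - a.1)) -
                    ((q.1 - a.1) * (y.2 - a.2) - (q.2 - a.2) * (y.1 - a.1))) by ring.
  rewrite E1 E2; ring.
have Fa : F a = (0,0) by apply: pt_eq; rewrite /F /crs /=; ring.
have Fq : F q = (1,0).
  apply: pt_eq; rewrite /F /=; last by rewrite /crs; ring.
  by rewrite -cic.
have Fr : F r = (0,1).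
  apply: pt_eq; rewrite /F /=; first by rewrite /crs; ring.
  by rewrite -cic.
have Hs' := simple_map _ _ _ hF Hs.
have Hr' : F (p i) = (0,1) \/ F (p (i.+1 %% n)%N) = (0,1).
  by case: Hr => <-; [left|right].
have Eq' : edge n (fun k => F (p k)) i (1,0) by rewrite -Fq; exact: edge_map' hF Eq.
have Hq1' : F (p i) <> (1,0) by rewrite -Fq => /(hF.2).
have Hq2' : F (p (i.+1 %% n)%N) <> (1,0) by rewrite -Fq => /(hF.2).
have Hfree' : forall l : R, 0 <= l -> l < 1 -> ~ polygon n (fun k => F (p k)) (l, 0).
  move=> l l0 l1 hp; apply: (Hfree l l0 l1); apply: (polygon_map hF).
  rewrite hF.1 Fa Fq.
  have -> : affine (0,0) (1,0) l = (l, 0 : R) by apply: pt_eq; rewrite /affine /=; ring.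
  exact: hp.
have [k [Hk [h1 [h2 [h3 Hv]]]]] := core_norm _ _ _ Hs' Hi Hr' Eq' Hq1' Hq2' Hfree'.
exists k; split=> //; split.
  move=> x ox px; apply: (Hv (F x)); last exact: polygon_map' hF px.
  rewrite -Fa; exact: oseg_map hF ox.
exists (F (p k)).1, (F (p k)).2; split=> //; split=> //.
rewrite /F /=; split.
  have -> : crs a (p k) r * ic * (q.1 - a.1) + crs a q (p k) * ic * (r.1 - a.1) =
    ((p k).1 - a.1) * (crs a q r * ic) by rewrite /crs; ring.
  by rewrite cic mulr1.
have -> : crs a (p k) r * ic * (q.2 - a.2) + crs a q (p k) * ic * (r.2 - a.2) =
  ((p k).2 - a.2) * (crs a q r * ic) by rewrite /crs; ring.
by rewrite cic mulr1.
Qed.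

Lemma proj_lemma {R : realFieldType} (d u : point R) :
  0 < d.1 ^+ 2 + d.2 ^+ 2 -> d.1 * u.2 - d.2 * u.1 = 0 ->
  u.1 = (u.1 * d.1 + u.2 * d.2) / (d.1 ^+ 2 + d.2 ^+ 2) * d.1 /\
  u.2 = (u.1 * d.1 + u.2 * d.2) / (d.1 ^+ 2 + d.2 ^+ 2) * d.2.
Proof.
move=> hd hc.
have hn : d.1 ^+ 2 + d.2 ^+ 2 != 0 by apply/eqP; lra.
split.
  apply: (mulIf hn); rewrite mulrAC divfK //.
  have -> : (u.1 * d.1 + u.2 * d.2) * d.1 = u.1 * d.1 ^+ 2 + d.2 * (d.1 * u.2) by ring.
  have -> : d.1 * u.2 = d.2 * u.1 by lra.
  ring.
apply: (mulIf hn); rewrite mulrAC divfK //.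
have -> : (u.1 * d.1 + u.2 * d.2) * d.2 = u.2 * d.2 ^+ 2 + d.1 * (d.2 * u.1) by ring.
have -> : d.2 * u.1 = d.1 * u.2 by lra.
ring.
Qed.

Definition pt {R : realFieldType} (a d : point R) (l : R) : point R :=
  (a.1 + l * d.1, a.2 + l * d.2).

Lemma first_hit {R : realFieldType} n (p : nat -> point R) (a d : point R) :
  ~ polygon n p a -> d <> (0,0) ->
  (exists x, ray a d x /\ polygon n p x) ->
  exists l0 : R, 0 < l0 /\ polygon n p (pt a d l0) /\
    forall l : R, 0 <= l -> l < l0 -> ~ polygon n p (pt a d l).
Proof.
move=> Ha Hd [x [[lam [hl0 Ex]] Hx]].
have hdd : 0 < d.1 ^+ 2 + d.2 ^+ 2.
  case: (ltP 0 (d.1 ^+ 2 + d.2 ^+ 2)) => // h; exfalso; apply: Hd.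
  apply: pt_eq => /=; nra.
pose dd := d.1 ^+ 2 + d.2 ^+ 2.
pose f k := if (k < n)%N then (((p k).1 - a.1) * d.1 + ((p k).2 - a.2) * d.2) / dd
  else let s := p (k - n)%N in let t := p ((k - n).+1 %% n)%N in
    ((s.1 - a.1) * (t.2 - s.2) - (s.2 - a.2) * (t.1 - s.1)) /
    (d.1 * (t.2 - s.2) - d.2 * (t.1 - s.1)).
have Hpa : pt a d 0 = a by apply: pt_eq; rewrite /pt /=; ring.
have C : forall l : R, 0 <= l -> polygon n p (pt a d l) ->
    exists k, (k < n + n)%N /\ (0 <= f k /\ polygon n p (pt a d (f k))) /\ f k <= l.
  move=> l hl [j hj [tau [ht0 [ht1 Ej]]]].
  have Hj1 : (j.+1 %% n < n)%N by rewrite ltn_mod; lia.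
  have e1 : a.1 + l * d.1 = (p j).1 + tau * ((p (j.+1 %% n)%N).1 - (p j).1).
    by move: (congr1 fst Ej); rewrite /pt /affine /=.
  have e2 : a.2 + l * d.2 = (p j).2 + tau * ((p (j.+1 %% n)%N).2 - (p j).2).
    by move: (congr1 snd Ej); rewrite /pt /affine /=.
  have hpl : polygon n p (pt a d l) by exists j => //; exists tau.
  set s := p j in e1 e2; set t := p (j.+1 %% n)%N in e1 e2.
  case: (eqVneq (d.1 * (t.2 - s.2) - d.2 * (t.1 - s.1)) 0) => hD; last first.
    exists (n + j)%N; split; first lia.
    have -> : f (n + j)%N = l.
      rewrite /f ifF; last by apply/negbTE; rewrite -leqNgt leq_addr.
      have -> : (n + j - n = j)%N by lia.
      rewrite -/s -/t; apply: (mulIf hD); rewrite divfK //.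
      have -> : s.1 - a.1 = l * d.1 - tau * (t.1 - s.1) by lra.
      have -> : s.2 - a.2 = l * d.2 - tau * (t.2 - s.2) by lra.
      ring.
    by split.
  have cs : d.1 * (s.2 - a.2) - d.2 * (s.1 - a.1) = 0.
    have -> : s.2 - a.2 = l * d.2 - tau * (t.2 - s.2) by lra.
    have -> : s.1 - a.1 = l * d.1 - tau * (t.1 - s.1) by lra.
    have -> : d.1 * (l * d.2 - tau * (t.2 - s.2)) - d.2 * (l * d.1 - tau * (t.1 - s.1)) =
      - tau * (d.1 * (t.2 - s.2) - d.2 * (t.1 - s.1)) by ring.
    by rewrite hD mulr0.
  have ct : d.1 * (t.2 - a.2) - d.2 * (t.1 - a.1) = 0.
    have -> : d.1 * (t.2 - a.2) - d.2 * (t.1 - a.1) =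
      (d.1 * (t.2 - s.2) - d.2 * (t.1 - s.1)) + (d.1 * (s.2 - a.2) - d.2 * (s.1 - a.1)) by ring.
    by rewrite hD cs addr0.
  have [ps1 ps2] := proj_lemma d (s.1 - a.1, s.2 - a.2) hdd cs.
  have [pt1 pt2] := proj_lemma d (t.1 - a.1, t.2 - a.2) hdd ct.
  rewrite /= in ps1 ps2 pt1 pt2.
  have fs : f j = ((s.1 - a.1) * d.1 + (s.2 - a.2) * d.2) / dd by rewrite /f hj.
  have ft : f (j.+1 %% n)%N = ((t.1 - a.1) * d.1 + (t.2 - a.2) * d.2) / dd by rewrite /f Hj1.
  rewrite -/dd -fs in ps1 ps2; rewrite -/dd -ft in pt1 pt2.
  set ls := f j in fs ps1 ps2; set lt := f (j.+1 %% n)%N in ft pt1 pt2.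
  have q1 : (l - (ls + tau * (lt - ls))) * d.1 = 0.
    have -> : (l - (ls + tau * (lt - ls))) * d.1 =
      (a.1 + l * d.1 - (s.1 + tau * (t.1 - s.1))) + ((s.1 - a.1) - ls * d.1) * (1 - tau)
      + tau * ((t.1 - a.1) - lt * d.1) by ring.
    rewrite e1 -ps1 -pt1; ring.
  have q2 : (l - (ls + tau * (lt - ls))) * d.2 = 0.
    have -> : (l - (ls + tau * (lt - ls))) * d.2 =
      (a.2 + l * d.2 - (s.2 + tau * (t.2 - s.2))) + ((s.2 - a.2) - ls * d.2) * (1 - tau)
      + tau * ((t.2 - a.2) - lt * d.2) by ring.
    rewrite e2 -ps2 -pt2; ring.
  have el : l = ls + tau * (lt - ls).
    have hn : dd != 0 by apply/eqP; rewrite /dd; lra.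
    apply/eqP; rewrite -subr_eq0; apply/eqP; apply: (mulIf hn); rewrite mul0r /dd.
    have -> : (l - (ls + tau * (lt - ls))) * (d.1 ^+ 2 + d.2 ^+ 2) =
      ((l - (ls + tau * (lt - ls))) * d.1) * d.1 + ((l - (ls + tau * (lt - ls))) * d.2) * d.2 by ring.
    rewrite q1 q2; ring.
  have Gen : forall m lm, (m < n)%N -> edge n p j (p m) ->
      (p m).1 - a.1 = lm * d.1 -> (p m).2 - a.2 = lm * d.2 -> f m = lm -> lm <= l ->
      exists k, (k < n + n)%N /\ (0 <= f k /\ polygon n p (pt a d (f k))) /\ f k <= l.
    move=> m lm hm em em1 em2 fm hlm.
    have ptm : pt a d lm = p m by apply: pt_eq; rewrite /pt /=; lra.
    case: (leP 0 lm) => h0.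
      exists m; split; first lia; rewrite fm; split=> //; split=> //.
      by rewrite ptm; exact: vtx_poly.
    exfalso; apply: Ha; exists j => //.
    have hd : 0 < l - lm by lra.
    set th := - lm / (l - lm).
    have eth : th * (l - lm) = - lm by rewrite /th mulfVK //; apply/eqP; lra.
    have th0 : 0 <= th by nra.
    have th1 : th <= 1 by nra.
    have ej : edge n p j (pt a d l) by exists tau.
    have := cseg_conv em ej th0 th1.
    have -> : affine (p m) (pt a d l) th = a; last by [].
    apply: pt_eq; rewrite /affine /pt /=.
      have -> : (p m).1 = a.1 + lm * d.1 by lra.
      have -> : a.1 + lm * d.1 + th * (a.1 + l * d.1 - (a.1 + lm * d.1)) =
        a.1 + (th * (l - lm) + lm) * d.1 by ring.
      rewrite eth; ring.
    have -> : (p m).2 = a.2 + lm * d.2 by lra.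
    have -> : a.2 + lm * d.2 + th * (a.2 + l * d.2 - (a.2 + lm * d.2)) =
      a.2 + (th * (l - lm) + lm) * d.2 by ring.
    rewrite eth; ring.
  case: (leP ls lt) => hst.
    apply: (Gen j ls hj (cseg_l _ _)) => //; try lra; nra.
  apply: (Gen _ lt Hj1 (cseg_r _ _)) => //; try lra; nra.
have hx' : polygon n p (pt a d lam) by rewrite Ex in Hx.
have [k0 [hk0 [Q0 Hmin]]] := fin_min f (C lam hl0 hx').
case: Q0 => [[f0 p0] fl0].
clearbody f.
exists (f k0); split.
  rewrite lt_neqAle f0 andbT; apply/eqP => e; apply: Ha; by rewrite -Hpa e.
split=> // l l0 l1 hp.
have [k [hk [[fk pk] fkl]]] := C l l0 hp.
have hq : f k <= lam by lra.
have := Hmin k hk (conj (conj fk pk) hq); lra.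
Qed.


Definition vis {R : realFieldType} n (p : nat -> point R) (a : point R) k :=
  forall x, oseg a (p k) x -> ~ polygon n p x.

Lemma modS_ne n i : (1 < n)%N -> (i < n)%N -> (i.+1 %% n)%N <> i.
Proof.
move=> hn hi.
case: (ltnP i.+1 n) => h.
  rewrite modn_small //; lia.
have -> : i.+1 = n by lia.
rewrite modnn; lia.
Qed.

Lemma zero_on_edge {R : realFieldType} n (p : nat -> point R) (a d : point R) j l1 l2 :
  edge n p j (pt a d l1) -> edge n p j (pt a d l2) -> l1 <= 0 -> 0 <= l2 ->
  edge n p j a.
Proof.
move=> e1 e2 h1 h2.
case: (eqVneq l1 0) => h0.
  by have <- : pt a d l1 = a by apply: pt_eq; rewrite /pt h0 /=; ring.
have hd : 0 < l2 - l1 by rewrite lt_neqAle in h1 *; lra.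
move: (- l1 / (l2 - l1)) (mulfVK (lt0r_neq0 hd) (- l1)) => th eth.
have th0 : 0 <= th by nra.
have th1 : th <= 1 by nra.
have := cseg_conv e1 e2 th0 th1.
have -> : affine (pt a d l1) (pt a d l2) th = a; last by [].
apply: pt_eq; rewrite /affine /pt /=.
  have -> : a.1 + l1 * d.1 + th * (a.1 + l2 * d.1 - (a.1 + l1 * d.1)) =
    a.1 + (th * (l2 - l1) + l1) * d.1 by ring.
  rewrite eth; ring.
have -> : a.2 + l1 * d.2 + th * (a.2 + l2 * d.2 - (a.2 + l1 * d.2)) =
  a.2 + (th * (l2 - l1) + l1) * d.2 by ring.
rewrite eth; ring.
Qed.

Lemma noopp {R : realFieldType} (q s t u w : point R) sg al be al' be' ka :
  q.1 = (1 - sg) * s.1 + sg * t.1 -> q.2 = (1 - sg) * s.2 + sg * t.2 ->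
  t.1 * s.2 - t.2 * s.1 != 0 ->
  0 <= al -> 0 < be -> 0 <= al' -> 0 < be' ->
  u.1 = al * q.1 + be * s.1 -> u.2 = al * q.2 + be * s.2 ->
  w.1 = al' * q.1 + be' * t.1 -> w.2 = al' * q.2 + be' * t.2 ->
  0 < ka -> u.1 = - ka * w.1 -> u.2 = - ka * w.2 -> False.
Proof.
move=> q1 q2 hK ha hb ha' hb' u1 u2 w1 w2 hk e1 e2.
set K := t.1 * s.2 - t.2 * s.1 in hK.
have lu : u.1 * (s.2 - t.2) - u.2 * (s.1 - t.1) = (al + be) * K.
  rewrite u1 u2 q1 q2 /K; ring.
have lw : w.1 * (s.2 - t.2) - w.2 * (s.1 - t.1) = (al' + be') * K.
  rewrite w1 w2 q1 q2 /K; ring.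
have : (al + be) * K = - ka * ((al' + be') * K).
  rewrite -lu -lw e1 e2; ring.
move=> h.
have : (al + be + ka * (al' + be')) * K = 0 by rewrite mulrDl h; ring.
move/eqP; rewrite mulf_eq0 (negbTE hK) orbF => /eqP h2.
nra.
Qed.

Lemma scal_eq {R : realFieldType} {d : point R} {x y : R} :
  0 < d.1 ^+ 2 + d.2 ^+ 2 -> x * d.1 = y * d.1 -> x * d.2 = y * d.2 -> x = y.
Proof.
move=> hd e1 e2.
have hn : d.1 ^+ 2 + d.2 ^+ 2 != 0 by apply/eqP; lra.
apply: (mulIf hn).
have -> : x * (d.1 ^+ 2 + d.2 ^+ 2) = (x * d.1) * d.1 + (x * d.2) * d.2 by ring.
rewrite e1 e2; ring.
Qed.

Lemma dpos {R : realFieldType} {d : point R} : d <> (0,0) -> 0 < d.1 ^+ 2 + d.2 ^+ 2.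
Proof.
move=> Hd; case: (ltP 0 (d.1 ^+ 2 + d.2 ^+ 2)) => // h; exfalso; apply: Hd.
apply: pt_eq => /=; nra.
Qed.

Lemma L2 {R : realFieldType} n (p : nat -> point R) (a d : point R) :
  (1 < n)%N -> simple_polygon n p -> ~ polygon n p a -> d <> (0,0) ->
  (exists x, ray a d x /\ polygon n p x) ->
  (exists k, (k < n)%N /\ vis n p a k /\ exists l : R, 0 < l /\ p k = pt a d l) \/
  (exists k1 k2, (k1 < n)%N /\ (k2 < n)%N /\ vis n p a k1 /\ vis n p a k2 /\
     0 < d.1 * ((p k1).2 - a.2) - d.2 * ((p k1).1 - a.1) /\
     d.1 * ((p k2).2 - a.2) - d.2 * ((p k2).1 - a.1) < 0 /\
     forall ka, 0 < ka -> (p k1).1 - a.1 = - ka * ((p k2).1 - a.1) ->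
        (p k1).2 - a.2 = - ka * ((p k2).2 - a.2) -> False).
Proof.
move=> hn Hs Ha Hd Hray.
have [l0 [hl0 [[i hi ei] Hfr]]] := first_hit _ _ _ _ Ha Hd Hray.
have Hi1 : (i.+1 %% n < n)%N by rewrite ltn_mod; lia.
have hdd := dpos Hd.
have Hfree : forall l : R, 0 <= l -> l < 1 -> ~ polygon n p (affine a (pt a d l0) l).
  move=> l h0 h1.
  have -> : affine a (pt a d l0) l = pt a d (l * l0) by apply: pt_eq; rewrite /affine /pt /=; ring.
  apply: Hfr; nra.
have visq : forall k, p k = pt a d l0 -> vis n p a k.
  move=> k ek x [t [t0 [t1 ->]]]; rewrite ek; exact: (Hfree t (ltW t0) t1).
case: (classic (p i = pt a d l0)) => hq1.
  left; exists i; split=> //; split; [exact: visq | by exists l0].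
case: (classic (p (i.+1 %% n)%N = pt a d l0)) => hq2.
  left; exists (i.+1 %% n)%N; split=> //; split; [exact: visq | by exists l0].
right.
have [sg [sg0 [sg1 Eq]]] := ei.
have q1 : a.1 + l0 * d.1 = (p i).1 + sg * ((p (i.+1 %% n)%N).1 - (p i).1).
  by move: (congr1 fst Eq); rewrite /pt /affine /=.
have q2 : a.2 + l0 * d.2 = (p i).2 + sg * ((p (i.+1 %% n)%N).2 - (p i).2).
  by move: (congr1 snd Eq); rewrite /pt /affine /=.
have hsg0 : 0 < sg.
  rewrite lt_neqAle sg0 andbT; apply/eqP => e; apply: hq1; rewrite Eq -e.
  apply: pt_eq; rewrite /affine /=; ring.
have hsg1 : sg < 1.
  rewrite lt_neqAle sg1 andbT; apply/eqP => e; apply: hq2; rewrite Eq e.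
  apply: pt_eq; rewrite /affine /=; ring.
have hrel : (1 - sg) * (d.1 * ((p i).2 - a.2) - d.2 * ((p i).1 - a.1)) +
    sg * (d.1 * ((p (i.+1 %% n)%N).2 - a.2) - d.2 * ((p (i.+1 %% n)%N).1 - a.1)) = 0.
  have -> : (1 - sg) * (d.1 * ((p i).2 - a.2) - d.2 * ((p i).1 - a.1)) +
    sg * (d.1 * ((p (i.+1 %% n)%N).2 - a.2) - d.2 * ((p (i.+1 %% n)%N).1 - a.1)) =
    d.1 * ((p i).2 + sg * ((p (i.+1 %% n)%N).2 - (p i).2) - a.2) -
    d.2 * ((p i).1 + sg * ((p (i.+1 %% n)%N).1 - (p i).1) - a.1) by ring.
  rewrite -q1 -q2; ring.
case: (eqVneq (d.1 * ((p i).2 - a.2) - d.2 * ((p i).1 - a.1)) 0) => hcs.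
  exfalso.
  have hct : d.1 * ((p (i.+1 %% n)%N).2 - a.2) - d.2 * ((p (i.+1 %% n)%N).1 - a.1) = 0.
    move: hrel; rewrite hcs mulr0 add0r => /eqP; rewrite mulf_eq0 => /orP [/eqP h|/eqP //].
    lra.
  have [ls [els1 els2]] : exists ls, (p i).1 - a.1 = ls * d.1 /\ (p i).2 - a.2 = ls * d.2.
    by eexists; exact: (proj_lemma d ((p i).1 - a.1, (p i).2 - a.2) hdd hcs).
  have [lt [elt1 elt2]] : exists lt, (p (i.+1 %% n)%N).1 - a.1 = lt * d.1 /\
      (p (i.+1 %% n)%N).2 - a.2 = lt * d.2.
    by eexists; exact: (proj_lemma d (_, _) hdd hct).
  have ps : p i = pt a d ls by apply: pt_eq; rewrite /pt /=; lra.
  have pt' : p (i.+1 %% n)%N = pt a d lt by apply: pt_eq; rewrite /pt /=; lra.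
  have el : l0 = ls + sg * (lt - ls).
    apply: (scal_eq hdd).
      have -> : (ls + sg * (lt - ls)) * d.1 = ls * d.1 + sg * (lt * d.1 - ls * d.1) by ring.
      rewrite -els1 -elt1; lra.
    have -> : (ls + sg * (lt - ls)) * d.2 = ls * d.2 + sg * (lt * d.2 - ls * d.2) by ring.
    rewrite -els2 -elt2; lra.
  have hne : ls <> lt.
    move=> e; have [Hs1 _] := Hs; apply: (Hs1 i (i.+1 %% n)%N hi Hi1 (nesym (modS_ne _ _ hn hi))).
    by rewrite ps pt' e.
  have eiq : edge n p i (pt a d l0) by exists sg.
  case: (ltP ls lt) => hlt.
    have hl : ls < l0 by rewrite el; nra.
    case: (leP ls 0) => h0.
      apply: Ha; exists i => //.
      apply: (@zero_on_edge R n p a d i ls l0) => //; [rewrite -ps; exact: cseg_l | lra].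
    by apply: (Hfr ls (ltW h0) hl); rewrite -ps; exact: vtx_poly.
  have hlt' : lt < ls by rewrite lt_neqAle hlt andbT; apply/eqP => e; exact: hne (esym e).
  have hl : lt < l0 by rewrite el; nra.
  case: (leP lt 0) => h0.
    apply: Ha; exists i => //.
    apply: (@zero_on_edge R n p a d i lt l0) => //; [rewrite -pt'; exact: cseg_r | lra].
  by apply: (Hfr lt (ltW h0) hl); rewrite -pt'; exact: vtx_poly.
set s1 := (p i).1 - a.1. set s2 := (p i).2 - a.2.
set t1 := (p (i.+1 %% n)%N).1 - a.1. set t2 := (p (i.+1 %% n)%N).2 - a.2.
have qq1 : l0 * d.1 = (1 - sg) * s1 + sg * t1 by rewrite /s1 /t1; lra.
have qq2 : l0 * d.2 = (1 - sg) * s2 + sg * t2 by rewrite /s2 /t2; lra.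
have hct : d.1 * t2 - d.2 * t1 != 0.
  apply/eqP => h; move: hrel; rewrite -/s1 -/s2 -/t1 -/t2 h mulr0 addr0 => /eqP.
  rewrite mulf_eq0 (negbTE hcs) orbF => /eqP; lra.
have l0n : l0 != 0 by apply/eqP; lra.
have ns : crs a (pt a d l0) (p i) != 0.
  have -> : crs a (pt a d l0) (p i) = l0 * (d.1 * s2 - d.2 * s1) by rewrite /crs /pt /s1 /s2 /=; ring.
  by rewrite mulf_neq0.
have nt : crs a (pt a d l0) (p (i.+1 %% n)%N) != 0.
  have -> : crs a (pt a d l0) (p (i.+1 %% n)%N) = l0 * (d.1 * t2 - d.2 * t1) by rewrite /crs /pt /t1 /t2 /=; ring.
  by rewrite mulf_neq0.
have [ku [hku [visu [au [bu [hau [hbu [eu1 eu2]]]]]]]] :=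
  side_lemma n p a (pt a d l0) (p i) i Hs hi ei hq1 hq2 (or_introl erefl) ns Hfree.
have [kw [hkw [visw [aw [bw [haw [hbw [ew1 ew2]]]]]]]] :=
  side_lemma n p a (pt a d l0) (p (i.+1 %% n)%N) i Hs hi ei hq1 hq2 (or_intror erefl) nt Hfree.
rewrite /pt /= -/s1 -/s2 -/t1 -/t2 in eu1 eu2 ew1 ew2.
have eu1' : (p ku).1 - a.1 = au * (l0 * d.1) + bu * s1 by rewrite eu1; ring.
have eu2' : (p ku).2 - a.2 = au * (l0 * d.2) + bu * s2 by rewrite eu2; ring.
have ew1' : (p kw).1 - a.1 = aw * (l0 * d.1) + bw * t1 by rewrite ew1; ring.
have ew2' : (p kw).2 - a.2 = aw * (l0 * d.2) + bw * t2 by rewrite ew2; ring.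
have cu : d.1 * ((p ku).2 - a.2) - d.2 * ((p ku).1 - a.1) = bu * (d.1 * s2 - d.2 * s1).
  by rewrite eu1' eu2'; ring.
have cw : d.1 * ((p kw).2 - a.2) - d.2 * ((p kw).1 - a.1) = bw * (d.1 * t2 - d.2 * t1).
  by rewrite ew1' ew2'; ring.
have hK : sg * (t1 * s2 - t2 * s1) = l0 * (d.1 * s2 - d.2 * s1).
  have -> : l0 * (d.1 * s2 - d.2 * s1) = (l0 * d.1) * s2 - (l0 * d.2) * s1 by ring.
  rewrite qq1 qq2; ring.
have hKn : t1 * s2 - t2 * s1 != 0.
  apply/eqP => h; move: hK; rewrite h mulr0 => /esym /eqP; rewrite mulf_eq0 (negbTE l0n) /=.
  by rewrite (negbTE hcs).
have hrel' : (1 - sg) * (d.1 * s2 - d.2 * s1) + sg * (d.1 * t2 - d.2 * t1) = 0 by [].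
case: (ltP 0 (d.1 * s2 - d.2 * s1)) => hpos.
  have h1 : 0 < (1 - sg) * (d.1 * s2 - d.2 * s1) by apply: mulr_gt0; lra.
  have h2 : sg * (d.1 * t2 - d.2 * t1) < 0 by lra.
  have hneg : d.1 * t2 - d.2 * t1 < 0 by rewrite -(pmulr_rlt0 _ hsg0).
  exists ku, kw; split=> //; split=> //; split=> //; split=> //; split.
    by rewrite cu; apply: mulr_gt0.
  split; first by rewrite cw pmulr_rlt0.
  move=> ka hk e1 e2.
  apply: (@noopp R (l0 * d.1, l0 * d.2) (s1, s2) (t1, t2) ((p ku).1 - a.1, (p ku).2 - a.2)
    ((p kw).1 - a.1, (p kw).2 - a.2) sg au bu aw bw ka) => //=.
have hneg : d.1 * s2 - d.2 * s1 < 0 by rewrite lt_neqAle hpos andbT.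
have h1 : (1 - sg) * (d.1 * s2 - d.2 * s1) < 0 by rewrite pmulr_rlt0 //; lra.
have h2 : 0 < sg * (d.1 * t2 - d.2 * t1) by lra.
have hpos' : 0 < d.1 * t2 - d.2 * t1 by rewrite -(pmulr_rgt0 _ hsg0).
exists kw, ku; split=> //; split=> //; split=> //; split=> //; split.
  by rewrite cw; apply: mulr_gt0.
split; first by rewrite cu pmulr_rlt0.
move=> ka hk e1 e2.
apply: (@noopp R (l0 * d.1, l0 * d.2) (t1, t2) (s1, s2) ((p kw).1 - a.1, (p kw).2 - a.2)
  ((p ku).1 - a.1, (p ku).2 - a.2) (1 - sg) aw bw au bu ka) => //=.
- rewrite qq1; ring.
- rewrite qq2; ring.
- apply/eqP => h; move/eqP: hKn; apply; lra.
Qed.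


Lemma three_nonadj n i j k : (4 <= n)%N -> (i < n)%N -> (j < n)%N -> (k < n)%N ->
  i <> j -> j <> k -> i <> k ->
  ~ adjacent_idx n i j \/ ~ adjacent_idx n j k \/ ~ adjacent_idx n i k.
Proof.
move=> hn hi hj hk hij hjk hik.
have m : forall x, (x < n)%N -> (x.+1 %% n = x.+1 /\ x.+1 < n)%N \/ (x.+1 %% n = 0 /\ x.+1 = n)%N.
  move=> x hx; case: (ltnP x.+1 n) => h.
    by left; rewrite modn_small.
  right; have e : x.+1 = n by lia.
  by rewrite e modnn.
case: (classic (adjacent_idx n i j)) => a1; last by left.
case: (classic (adjacent_idx n j k)) => a2; last by right; left.
case: (classic (adjacent_idx n i k)) => a3; last by right; right.
exfalso; move: a1 a2 a3 (m i hi) (m j hj) (m k hk); rewrite /adjacent_idx.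
move: (i.+1 %% n)%N (j.+1 %% n)%N (k.+1 %% n)%N => x y z.
lia.
Qed.

Lemma finish {R : realFieldType} n (p : nat -> point R) (a : point R) i j k :
  (4 <= n)%N -> (i < n)%N -> (j < n)%N -> (k < n)%N ->
  i <> j -> j <> k -> i <> k -> vis n p a i -> vis n p a j -> vis n p a k ->
  exists i j : nat,
    (i < n)%N /\ (j < n)%N /\ i <> j /\ ~ adjacent_idx n i j /\
    (forall x, oseg a (p i) x -> ~ polygon n p x) /\
    (forall x, oseg a (p j) x -> ~ polygon n p x).
Proof.
move=> hn hi hj hk hij hjk hik vi vj vk.
case: (three_nonadj _ _ _ _ hn hi hj hk hij hjk hik) => [h|[h|h]].
- by exists i, j.
- by exists j, k.
- by exists i, k.
Qed.

Lemma vtx_ne {R : realFieldType} n (p : nat -> point R) (a : point R) k :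
  ~ polygon n p a -> (k < n)%N -> ((p k).1 - a.1) ^+ 2 + ((p k).2 - a.2) ^+ 2 > 0.
Proof.
move=> Ha hk.
case: (ltP 0 (((p k).1 - a.1) ^+ 2 + ((p k).2 - a.2) ^+ 2)) => // h; exfalso.
have s1 := sqr_ge0 ((p k).1 - a.1); have s2 := sqr_ge0 ((p k).2 - a.2).
have e1 : ((p k).1 - a.1) ^+ 2 = 0 by lra.
have e2 : ((p k).2 - a.2) ^+ 2 = 0 by lra.
move: e1 e2 => /eqP; rewrite sqrf_eq0 subr_eq0 => /eqP e1 /eqP; rewrite sqrf_eq0 subr_eq0 => /eqP e2.
apply: Ha; have -> : a = p k by apply: pt_eq; rewrite ?e1 ?e2.
exact: vtx_poly.
Qed.

Theorem lemma4p2 (R : realType) (n : nat) (p : nat -> point R) (a : point R) :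
  (4 <= n)%N ->
  simple_polygon n p ->
  ~ polygon n p a ->
  (forall w : point R, w <> (0, 0) ->
     exists x, ray a w x /\ polygon n p x) ->
  exists i j : nat,
    (i < n)%N /\ (j < n)%N /\ i <> j /\ ~ adjacent_idx n i j /\
    (forall x, oseg a (p i) x -> ~ polygon n p x) /\
    (forall x, oseg a (p j) x -> ~ polygon n p x).
Proof.
move=> hn Hs Ha Hray.
have hn1 : (1 < n)%N by lia.
have L := fun d hd => @L2 R n p a d hn1 Hs Ha hd (Hray d hd).
have [k1 [hk1 v1]] : exists k1, (k1 < n)%N /\ vis n p a k1.
  have hd : ((1 : R), (0 : R)) <> (0, 0) by move=> /(congr1 fst) /= /eqP; rewrite oner_eq0.
  case: (L _ hd) => [[k [hk [vk _]]]|[k [_ [hk [_ [vk _]]]]]]; by exists k.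
have nz1 := vtx_ne _ _ _ _ Ha hk1.
set x := (p k1).1 - a.1 in nz1; set y := (p k1).2 - a.2 in nz1.
have hd : ((- x), (- y)) <> (0, 0).
  move=> e; have e1 := congr1 fst e; have e2 := congr1 snd e; simpl in e1, e2.
  have hx : x = 0 by lra. have hy : y = 0 by lra.
  rewrite hx hy in nz1; move: nz1; rewrite expr0n /=; lra.
case: (L _ hd) => [[k2 [hk2 [v2 [l [hl e2]]]]]|[ku [kw [hku [hkw [vu [vw [cu [cw _]]]]]]]]]; last first.
  rewrite /= in cu cw.
  apply: (@finish _ n p a k1 ku kw) => //.
  - move=> e; rewrite -e -/x -/y in cu; nra.
  - move=> e; rewrite e in cu; lra.
  - move=> e; rewrite -e -/x -/y in cw; nra.
have ek1 : (p k2).1 - a.1 = - l * x by rewrite e2 /pt /=; ring.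
have ek2 : (p k2).2 - a.2 = - l * y by rewrite e2 /pt /=; ring.
have hd2 : ((- y), x) <> (0, 0).
  move=> e; have e1 := congr1 fst e; have e3 := congr1 snd e; simpl in e1, e3.
  have hy : y = 0 by lra.
  rewrite e3 hy in nz1; move: nz1; rewrite expr0n /=; lra.
have d12 : k1 <> k2.
  move=> e; rewrite -e -/x -/y in ek1 ek2.
  have hx : x = 0.
    have h : (1 + l) * x = 0 by lra.
    move/eqP: h; rewrite mulf_eq0 => /orP [/eqP h|/eqP //]; lra.
  have hy : y = 0.
    have h : (1 + l) * y = 0 by lra.
    move/eqP: h; rewrite mulf_eq0 => /orP [/eqP h|/eqP //]; lra.
  rewrite hx hy in nz1; move: nz1; rewrite expr0n /=; lra.
case: (L _ hd2) => [[k3 [hk3 [v3 [l3 [hl3 e3]]]]]|[ku [kw [hku [hkw [vu [vw [cu [cw Hno]]]]]]]]].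
  have e31 : (p k3).1 - a.1 = - l3 * y by rewrite e3 /pt /=; ring.
  have e32 : (p k3).2 - a.2 = l3 * x by rewrite e3 /pt /=; ring.
  have cr3 : x * ((p k3).2 - a.2) - y * ((p k3).1 - a.1) = l3 * (x ^+ 2 + y ^+ 2).
    by rewrite e31 e32; ring.
  have pos := mulr_gt0 hl3 nz1.
  apply: (@finish _ n p a k1 k2 k3) => //.
  - move=> e; rewrite -e ek1 ek2 in cr3; lra.
  - move=> e; rewrite -e -/x -/y in cr3; lra.
have pos := mulr_gt0 hl nz1.
rewrite /= in cu cw.
have ku1 : ku <> k1 by move=> e; rewrite e -/x -/y in cu; nra.
have kw2 : kw <> k2 by move=> e; rewrite e ek1 ek2 in cw; nra.
have kuw : ku <> kw by move=> e; rewrite e in cu; lra.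
case: (classic (ku = k2)) => hu2; last first.
  apply: (@finish _ n p a k1 k2 ku) => //; exact: nesym.
case: (classic (kw = k1)) => hw1; last first.
  apply: (@finish _ n p a k1 k2 kw) => //; exact: nesym.
exfalso; apply: (Hno l hl); rewrite hu2 hw1 -/x -/y; [exact: ek1 | exact: ek2].
Qed.
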